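(* Let $\mathtt{L}$ be a line of $\mathcal{S}$ and $\theta$ a point of $\mathcal{S}$. If $\theta$ has distance $2$ from two points of $\mathtt{L}$, then $\theta$ is collinear with the third point of $\mathtt{L}$.
   Context: Let $S=(P,L)$ and $S'=(P',L')$ be generalized quadrangles of order $(2,2)$ (every line has 3 points, every point lies on 3 lines, and for each point $x$ and line $l\not\ni x$ exactly one point of $l$ is collinear with $x$), with an isomorphism $x\mapsto x'$ from $S$ to $S'$. In a point-line geometry, $x^{\perp}$ is $x$ together with all points collinear with $x$, and $A^{\perp}=\bigcap_{a\in A}a^{\perp}$. A triad is a set of three pairwise non-collinear points, complete if $|T^{\perp}|=3$. The geometry $\mathcal{S}=(\mathcal{P},\mathcal{L})$ has point set $\mathcal{P}=\{(x,y')\in P\times P':y'\in x'^{\perp}\}$ and lines all $3$-subsets $\{(x,u'),(y,v'),(z,w')\}$ of $\mathcal{P}$ where $T=\{x,y,z\}$ (three distinct points) is a line or a complete triad of $S$ and $\{u',v',w'\}=T'^{\perp}$ in $S'$ with $u',v',w'$ distinct. Distance is measured in the collinearity graph of $\mathcal{S}$. *)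

(* Defs.v *)
From mathcomp Require Import all_boot.
Set Implicit Arguments. Unset Strict Implicit. Unset Printing Implicit Defensive.

Section Geometry.
Variable T : finType.
Variable lines : {set {set T}}.

Definition collinear (x y : T) : bool :=
  (x != y) && [exists l in lines, (x \in l) && (y \in l)].

Definition perp (x : T) : {set T} := [set y | (y == x) || collinear x y].

Definition perpset (A : {set T}) : {set T} := \bigcap_(a in A) perp a.

Definition triad (A : {set T}) : bool :=
  (#|A| == 3) && [forall x in A, forall y in A, ~~ collinear x y].

Definition complete_triad (A : {set T}) : bool :=
  triad A && (#|perpset A| == 3).

Fixpoint walk (n : nat) (x y : T) : Prop :=
  match n with
  | 0 => x = y
  | n'.+1 => exists z, collinear x z /\ walk n' z y
  end.

Definition dist_eq (x y : T) (n : nat) : Prop :=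
  walk n x y /\ forall m, m < n -> ~ walk m x y.

End Geometry.

Record GQ22 (P : finType) (L : {set {set P}}) : Prop := {
  gq_line3 : forall l, l \in L -> #|l| = 3;
  gq_point3 : forall x, #|[set l in L | x \in l]| = 3;
  gq_unique_line : forall x y l m, x != y -> l \in L -> m \in L ->
      x \in l -> y \in l -> x \in m -> y \in m -> l = m;
  gq_axiom : forall x l, l \in L -> x \notin l ->
      #|[set y in l | collinear L x y]| = 1
}.

Definition is_iso (P P' : finType) (L : {set {set P}}) (L' : {set {set P'}})
  (f : P -> P') : Prop :=
  bijective f /\ forall l : {set P}, (l \in L) = (f @: l \in L').

Section Construction.
Variables (P P' : finType) (L : {set {set P}}) (L' : {set {set P'}}) (f : P -> P').

Definition calP : {set P * P'} := [set xy | xy.2 \in perp L' (f xy.1)].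

Definition calL : {set {set P * P'}} :=
  [set X : {set P * P'} | [exists x : P, exists y : P, exists z : P,
     exists u : P', exists v : P', exists w : P',
     [&& X == [set (x, u); (y, v); (z, w)],
         X \subset calP,
         [&& x != y, y != z & x != z],
         ([set x; y; z] \in L) || complete_triad L [set x; y; z],
         perpset L' (f @: [set x; y; z]) == [set u; v; w] &
         [&& u != v, v != w & u != w]]]].

End Construction.

(* Main.v *)
Require Import Defs.
From mathcomp Require Import all_boot.
Set Implicit Arguments. Unset Strict Implicit. Unset Printing Implicit Defensive.

Lemma card3_eq (T : finType) (S : {set T}) a b c :
  #|S| = 3 -> a \in S -> b \in S -> c \in S -> a != b -> a != c -> b != c ->
  S = [set a; b; c].
Proof.
move=> hS aS bS cS ab ac bc; apply/esym/eqP; rewrite eqEcard; apply/andP; split.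
  by apply/subsetP=> x; rewrite !inE => /orP [/orP [] |] /eqP ->.
by rewrite hS -setUA cardsU1 cards2 !inE negb_or ab ac bc.
Qed.

Lemma card3_third (T : finType) (S : {set T}) a b :
  #|S| = 3 -> exists2 c, c \in S & (c != a) && (c != b).
Proof.
move=> hS; case: (boolP [exists x in S, (x != a) && (x != b)]) => [/exists_inP //| /exists_inPn H]; exfalso.
have : S \subset [set a; b].
  apply/subsetP=> x xS; have := H x xS; rewrite negb_and !negbK !inE.
  by case/orP=> ->; rewrite ?orbT.
move/subset_leq_card; rewrite hS cards2; by case: (a != b).
Qed.

Section GQ.
Variables (T : finType) (L : {set {set T}}) (G : GQ22 L).
Local Notation col := (collinear L).
Definition R x y := (x == y) || col x y.

Lemma col_sym x y : col x y = col y x.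
Proof.
rewrite /collinear eq_sym; case: (y != x) => //=.
by apply/exists_inP/exists_inP => [][l lL H]; exists l => //; rewrite andbC.
Qed.

Lemma col_irr x : col x x = false.
Proof. by rewrite /collinear eqxx. Qed.

Lemma R_sym x y : R x y = R y x.
Proof. by rewrite /R eq_sym col_sym. Qed.

Lemma R_refl x : R x x.
Proof. by rewrite /R eqxx. Qed.

Lemma Rs x y : R x y -> R y x. Proof. by rewrite R_sym. Qed.
Lemma ns (x y : T) : x != y -> y != x. Proof. by rewrite eq_sym. Qed.
Lemma cs x y : col x y -> col y x. Proof. by rewrite col_sym. Qed.
Lemma ncs x y : ~~ col x y -> ~~ col y x. Proof. by rewrite col_sym. Qed.

Lemma R_col x y : x != y -> R x y = col x y.
Proof. by rewrite /R => /negbTE ->. Qed.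

Lemma col_neq x y : col x y -> x != y.
Proof. by case/andP. Qed.

Lemma col_R x y : col x y -> R x y.
Proof. by rewrite /R => ->; rewrite orbT. Qed.

Lemma inperp x y : (y \in perp L x) = R x y.
Proof. by rewrite inE eq_sym. Qed.

Lemma col_line x y : col x y -> exists l, [/\ l \in L, x \in l & y \in l].
Proof. by case/andP=> _ /exists_inP [l lL /andP [xl yl]]; exists l. Qed.

Lemma R_line x y : R x y -> x != y -> exists l, [/\ l \in L, x \in l & y \in l].
Proof. by move=> Rxy nxy; apply: col_line; rewrite -R_col. Qed.

Lemma line_R l x y : l \in L -> x \in l -> y \in l -> R x y.
Proof.
move=> lL xl yl; rewrite /R; case: eqP => //= /eqP nxy.
by rewrite /collinear nxy; apply/exists_inP; exists l => //; rewrite xl yl.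
Qed.

Lemma line_uniq l m x y : x != y -> l \in L -> m \in L -> x \in l -> y \in l ->
  x \in m -> y \in m -> l = m.
Proof. exact: gq_unique_line. Qed.

Lemma gq_ex l x : l \in L -> x \notin l -> exists2 y, y \in l & col x y.
Proof.
move=> lL xl; have := gq_axiom G lL xl; move/eqP/cards1P => [y Hy].
have : y \in [set y0 in l | col x y0] by rewrite Hy set11.
by rewrite inE => /andP [yl cy]; exists y.
Qed.

Lemma gq_un l x y1 y2 : l \in L -> x \notin l -> y1 \in l -> y2 \in l ->
  col x y1 -> col x y2 -> y1 = y2.
Proof.
move=> lL xl y1l y2l c1 c2; have := gq_axiom G lL xl; move/eqP/cards1P => [y Hy].
have : y1 \in [set y0 in l | col x y0] by rewrite inE y1l c1.
have : y2 \in [set y0 in l | col x y0] by rewrite inE y2l c2.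
by rewrite Hy !inE => /eqP -> /eqP ->.
Qed.

Lemma L1 l u v z : l \in L -> u \in l -> v \in l -> u != v -> R z u -> R z v ->
  z \in l.
Proof.
move=> lL ul vl uv Rzu Rzv; apply/negPn/negP => zl.
have zu : z != u by apply: contraNneq zl => ->.
have zv : z != v by apply: contraNneq zl => ->.
rewrite R_col // in Rzu; rewrite R_col // in Rzv.
by move: uv; rewrite (gq_un lL zl ul vl Rzu Rzv) eqxx.
Qed.

Lemma line_third l u v : l \in L -> exists2 w, w \in l & (w != u) && (w != v).
Proof. by move=> lL; apply: card3_third; apply: gq_line3 G _ lL. Qed.

Lemma line_eq3 l u v w : l \in L -> u \in l -> v \in l -> w \in l ->
  u != v -> u != w -> v != w -> l = [set u; v; w].
Proof. by move=> lL; apply: card3_eq; apply: gq_line3 G _ lL. Qed.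

Lemma TPU l p q r s : l \in L -> p \in l -> q \in l -> r \in l -> s \in l ->
  p != q -> r != p -> r != q -> s != p -> s != q -> r = s.
Proof.
move=> lL pl ql rl sl pq rp rq sp sq.
have := line_eq3 lL pl ql rl pq; rewrite ![r == _]eq_sym in rp rq.
move=> /(_ rp rq) E; move: sl; rewrite E !inE (negbTE sp) (negbTE sq) /=.
by move/eqP.
Qed.

Lemma noline l x y u v : x != y -> ~~ col x y -> l \in L -> x \in l -> u \in l ->
  v \in l -> u != v -> R y u -> R y v -> False.
Proof.
move=> xy nc lL xl ul vl uv yu yv; have yl := L1 lL ul vl uv yu yv.
by move: nc; rewrite -R_col // (line_R lL xl yl).
Qed.

Lemma PN x y u v : x != y -> ~~ col x y -> R x u -> R y u -> R x v -> R y v ->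
  u != v -> ~~ col u v.
Proof.
move=> xy nc xu yu xv yv uv; apply/negP => /col_line [l [lL ul vl]].
have xl := L1 lL ul vl uv xu xv.
exact: (noline xy nc lL xl ul vl uv yu yv).
Qed.

Lemma PNx x y u : x != y -> ~~ col x y -> R x u -> R y u -> (u != x) && col x u.
Proof.
move=> xy nc xu yu; have ux : u != x.
  by apply: contraNneq nc => E; rewrite E R_sym R_col // in yu.
by rewrite ux -R_col // eq_sym.
Qed.

Lemma lines_pt x : #|[set l in L | x \in l]| = 3.
Proof. exact: gq_point3 G x. Qed.

Lemma TH x y u v : x != y -> ~~ col x y -> R x u -> R y u -> R x v -> R y v ->
  u != v -> exists w, [/\ R x w, R y w, w != u & w != v].
Proof.
move=> xy nc xu yu xv yv uv.
have /andP [ux cxu] := PNx xy nc xu yu; have /andP [vx cxv] := PNx xy nc xv yv.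
case: (col_line cxu) => lu [luL xlu ulu]; case: (col_line cxv) => lv [lvL xlv vlv].
have [m] := card3_third lu lv (lines_pt x); rewrite inE => /andP [mL xm] /andP [mlu mlv].
have ym : y \notin m.
  by apply: contraNN nc => ym; rewrite -R_col //; exact: line_R mL xm ym.
have [w wm cyw] := gq_ex mL ym.
exists w; split.
- exact: line_R mL xm wm.
- exact: col_R.
- apply: contraNneq mlu => wu; subst w; apply/eqP.
  by apply: (line_uniq _ mL luL xm wm xlu ulu); rewrite eq_sym.
- apply: contraNneq mlv => wv; subst w; apply/eqP.
  by apply: (line_uniq _ mL lvL xm wm xlv vlv); rewrite eq_sym.
Qed.

Lemma BD x y u v w a : x != y -> ~~ col x y -> R x u -> R y u -> R x v -> R y v ->
  R x w -> R y w -> u != v -> u != w -> v != w -> R x a -> R y a ->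
  [|| a == u, a == v | a == w].
Proof.
move=> xy nc xu yu xv yv xw yw uv uw vw xa ya.
have /andP [ux cxu] := PNx xy nc xu yu; have /andP [vx cxv] := PNx xy nc xv yv.
have /andP [wx cxw] := PNx xy nc xw yw; have /andP [ax cxa] := PNx xy nc xa ya.
case: (col_line cxu) => lu [luL xlu ulu]; case: (col_line cxv) => lv [lvL xlv vlv].
case: (col_line cxw) => lw [lwL xlw wlw]; case: (col_line cxa) => la [laL xla ala].
have D : forall l1 l2 p1 p2, l1 \in L -> l2 \in L -> x \in l1 -> x \in l2 ->
   p1 \in l1 -> p2 \in l2 -> R y p1 -> R y p2 -> p1 != p2 -> l1 != l2.
  move=> l1 l2 p1 p2 l1L l2L x1 x2 p11 p22 y1 y2 p12; apply/eqP => E; subst l2.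
  exact: (noline xy nc l1L x1 p11 p22 p12 y1 y2).
have M : forall l, l \in L -> x \in l -> l \in [set l in L | x \in l].
  by move=> l lL xl; rewrite inE lL xl.
have := card3_eq (lines_pt x) (M _ luL xlu) (M _ lvL xlv) (M _ lwL xlw).
move=> /(_ (D _ _ _ _ luL lvL xlu xlv ulu vlv yu yv uv)
   (D _ _ _ _ luL lwL xlu xlw ulu wlw yu yw uw)
   (D _ _ _ _ lvL lwL xlv xlw vlv wlw yv yw vw)) E.
have : la \in [set l in L | x \in l] by rewrite inE laL xla.
rewrite E !inE => /orP [/orP [] |] /eqP Ela; subst la.
- case: (boolP (a == u)) => // au; case: (noline xy nc luL xlu ala ulu au ya yu).
- case: (boolP (a == v)) => [_|av]; first by rewrite orbT.
  case: (noline xy nc lvL xlv ala vlv av ya yv).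
- case: (boolP (a == w)) => [_|aw]; first by rewrite !orbT.
  case: (noline xy nc lwL xlw ala wlw aw ya yw).
Qed.


Lemma R_uniq m x0 p q : m \in L -> p \in m -> q \in m -> q != p -> x0 \notin m ->
  R x0 p -> ~~ R x0 q.
Proof.
move=> mL pm qm qp x0m x0p; apply/negP => x0q.
have x0p' : x0 != p by apply: contraNneq x0m => ->.
have x0q' : x0 != q by apply: contraNneq x0m => ->.
rewrite R_col // in x0p; rewrite R_col // in x0q.
by move: qp; rewrite (gq_un mL x0m qm pm x0q x0p) eqxx.
Qed.

Lemma same_line l m p q : l \in L -> m \in L -> p \in l -> q \in l -> p \in m ->
  q \in m -> p != q -> l = m.
Proof. by move=> lL mL pl ql pm qm pq; apply: (line_uniq pq lL mL). Qed.

Lemma RG x y u v w z : x != y -> ~~ col x y -> R x u -> R y u -> R x v -> R y v ->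
  R x w -> R y w -> u != v -> u != w -> v != w -> R z u -> R z v -> z != x ->
  z != y -> R z w.
Proof.
move=> xy nc xu yu xv yv xw yw uv uw vw zu zv zx zy.
case: (boolP (R z w)) => // nzw; exfalso.
have ncuv := PN xy nc xu yu xv yv uv.
have ncuw := PN xy nc xu yu xw yw uw.
have ncvw := PN xy nc xv yv xw yw vw.
have /andP [ux cxu] := PNx xy nc xu yu; have /andP [vx cxv] := PNx xy nc xv yv.
have /andP [wx cxw] := PNx xy nc xw yw.
have /andP [uy cyu] := PNx (ns xy) (ncs nc) yu xu.
have /andP [vy cyv] := PNx (ns xy) (ncs nc) yv xv.
have /andP [wy cyw] := PNx (ns xy) (ncs nc) yw xw.
have zu' : z != u by apply: contraNneq ncuv => E; rewrite -R_col // -E.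
have zv' : z != v by apply: contraNneq ncuv => E; rewrite -R_col // R_sym -E.
have NZ : forall x0, R x0 u -> R x0 v -> z != x0 -> x0 != u -> ~~ R z x0.
  move=> x0 x0u x0v zx0 x0u'; apply/negP => zx0R.
  have [l [lL x0l ul]] := R_line x0u x0u'.
  have zl := L1 lL x0l ul x0u' zx0R zu.
  have vl := L1 lL x0l zl (ns zx0) (Rs x0v) (Rs zv).
  by move: ncuv; rewrite -R_col // (line_R lL ul vl).
have nzx := NZ x xu xv zx (ns ux).
have nzy := NZ y yu yv zy (ns uy).
have [mu [muL umu zmu]] := R_line (Rs zu) (ns zu').
have [mv [mvL vmv zmv]] := R_line (Rs zv) (ns zv').
have wmu : w \notin mu.
  apply/negP => wmu; move: ncuw; by rewrite -R_col // R_sym (line_R muL wmu umu).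
have wmv : w \notin mv.
  apply/negP => wmv; move: ncvw; by rewrite -R_col // R_sym (line_R mvL wmv vmv).
have [b bmu cwb] := gq_ex muL wmu.
have [c cmv cwc] := gq_ex mvL wmv.
have bz : b != z.
  by apply: contraNneq nzw => E; rewrite R_sym; apply: col_R; rewrite -E.
have cz : c != z.
  by apply: contraNneq nzw => E; rewrite R_sym; apply: col_R; rewrite -E.
have bu : b != u.
  by apply: contraNneq ncuw => E; rewrite col_sym -E.
have cv : c != v.
  by apply: contraNneq ncvw => E; rewrite col_sym -E.
have xmu : x \notin mu by apply: contraNN nzx => xmu; exact: line_R muL zmu xmu.
have ymu : y \notin mu by apply: contraNN nzy => ymu; exact: line_R muL zmu ymu.
have xmv : x \notin mv by apply: contraNN nzx => xmv; exact: line_R mvL zmv xmv.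
have ymv : y \notin mv by apply: contraNN nzy => ymv; exact: line_R mvL zmv ymv.
have nxb := R_uniq muL umu bmu bu xmu xu.
have nyb := R_uniq muL umu bmu bu ymu yu.
have nxc := R_uniq mvL vmv cmv cv xmv xv.
have nyc := R_uniq mvL vmv cmv cv ymv yv.
have [lx [lxL wlx xlx]] := col_line (cs cxw).
have [ly [lyL wly yly]] := col_line (cs cyw).
have [lb [lbL wlb blb]] := col_line cwb.
have [lc [lcL wlc clc]] := col_line cwc.
have M : forall l, l \in L -> w \in l -> l \in [set l in L | w \in l].
  by move=> l lL wl; rewrite inE lL wl.
have lxy : lx != ly.
  by apply/eqP => E; subst ly; move: nc; rewrite -R_col // (line_R lxL xlx yly).
have lxb : lx != lb.
  by apply/eqP => E; subst lb; move: nxb; rewrite (line_R lxL xlx blb).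
have lyb : ly != lb.
  by apply/eqP => E; subst lb; move: nyb; rewrite (line_R lyL yly blb).
have := card3_eq (lines_pt w) (M _ lxL wlx) (M _ lyL wly) (M _ lbL wlb) lxy lxb lyb.
move=> E; have := M _ lcL wlc; rewrite E !inE => /orP [/orP [] |] /eqP Elc; subst lc.
- by move: nxc; rewrite (line_R lxL xlx clc).
- by move: nyc; rewrite (line_R lyL yly clc).
have Rbc := line_R lbL blb clc.
have bc : b != c.
  apply/eqP => Ebc; subst c.
  have E2 := same_line muL mvL bmu zmu cmv zmv bz; subst mv.
  by move: ncuv; rewrite -R_col // (line_R muL umu vmv).
have cmu := L1 muL bmu zmu bz (Rs Rbc) (line_R mvL cmv zmv).
have E3 := same_line muL mvL cmu zmu cmv zmv cz; subst mv.
by move: ncuv; rewrite -R_col // (line_R muL umu vmv).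
Qed.


Lemma K x y u v a w : x != y -> u != v -> R x u -> R x v -> R y u -> R y v ->
  R a u -> R a v -> R w x -> R w y -> R a w.
Proof.
move=> xy uv xu xv yu yv au av wx wy.
case: (boolP (col x y)) => cxy.
  have [l [lL xl yl]] := col_line cxy.
  have ul := L1 lL xl yl xy (Rs xu) (Rs yu).
  have vl := L1 lL xl yl xy (Rs xv) (Rs yv).
  have al := L1 lL ul vl uv au av.
  have wl := L1 lL xl yl xy wx wy.
  exact: line_R lL al wl.
case: (boolP (a == x)) => [/eqP ->|ax]; first exact: Rs.
case: (boolP (a == y)) => [/eqP ->|ay]; first exact: Rs.
case: (boolP (w == u)) => [/eqP ->|wu] //.
case: (boolP (w == v)) => [/eqP ->|wv] //.
exact: (RG xy cxy xu yu xv yv (Rs wx) (Rs wy) uv (ns wu) (ns wv) au av ax ay).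
Qed.

Lemma NCt a al be ga t : col a al -> col a be -> col a ga -> ~~ col al be ->
  ~~ col al ga -> ~~ col be ga -> al != be -> al != ga -> be != ga ->
  ~~ R t al -> ~~ R t be -> ~~ R t ga -> ~~ R t a.
Proof.
move=> cal cbe cga nab nag nbg albe alga bega ntal ntbe ntga; apply/negP => ta.
have tna : t != a by apply: contraNneq ntal => ->; exact: col_R.
have [m [mL tm am]] := R_line ta tna.
have [l1 [l1L al1 all1]] := col_line cal.
have [l2 [l2L al2 bel2]] := col_line cbe.
have [l3 [l3L al3 gal3]] := col_line cga.
have M : forall l, l \in L -> a \in l -> l \in [set l in L | a \in l].
  by move=> l lL wl; rewrite inE lL wl.
have l12 : l1 != l2.
  by apply/eqP => E; subst l2; move: nab; rewrite -R_col // (line_R l1L all1 bel2).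
have l13 : l1 != l3.
  by apply/eqP => E; subst l3; move: nag; rewrite -R_col // (line_R l1L all1 gal3).
have l23 : l2 != l3.
  by apply/eqP => E; subst l3; move: nbg; rewrite -R_col // (line_R l2L bel2 gal3).
have := card3_eq (lines_pt a) (M _ l1L al1) (M _ l2L al2) (M _ l3L al3) l12 l13 l23.
move=> E; have := M _ mL am; rewrite E !inE => /orP [/orP [] |] /eqP Em; subst m.
- by move: ntal; rewrite (line_R l1L tm all1).
- by move: ntbe; rewrite (line_R l2L tm bel2).
- by move: ntga; rewrite (line_R l3L tm gal3).
Qed.

Lemma Cover a b al be ga t : a != b -> al != be -> al != ga -> be != ga ->
  R a al -> R a be -> R a ga -> R b al -> R b be -> R b ga ->
  [|| R t al, R t be | R t ga].
Proof.
move=> ab albe alga bega aal abe aga bal bbe bga.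
case: (boolP (col a b)) => cab.
  have [l [lL a_l b_l]] := col_line cab.
  have all := L1 lL a_l b_l ab (Rs aal) (Rs bal).
  have bel := L1 lL a_l b_l ab (Rs abe) (Rs bbe).
  have gal := L1 lL a_l b_l ab (Rs aga) (Rs bga).
  case: (boolP (t \in l)) => tl; first by rewrite (line_R lL tl all).
  have [y yl cty] := gq_ex lL tl.
  move: yl; rewrite (line_eq3 lL all bel gal albe alga bega) !inE.
  by move=> /orP [/orP [] |] /eqP <-; rewrite (col_R cty) ?orbT.
case: (boolP [|| R t al, R t be | R t ga]) => // H; exfalso.
move: H => /norP [ntal /norP [ntbe ntga]].
have nab := PN ab cab aal bal abe bbe albe.
have nag := PN ab cab aal bal aga bga alga.
have nbg := PN ab cab abe bbe aga bga bega.
have /andP [ala cal] := PNx ab cab aal bal.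
have /andP [bea cbe] := PNx ab cab abe bbe.
have /andP [gaa cga] := PNx ab cab aga bga.
have /andP [alb cbal] := PNx (ns ab) (ncs cab) bal aal.
have /andP [beb cbbe] := PNx (ns ab) (ncs cab) bbe abe.
have /andP [gab cbga] := PNx (ns ab) (ncs cab) bga aga.
have nta := NCt cal cbe cga nab nag nbg albe alga bega ntal ntbe ntga.
have ntb := NCt cbal cbbe cbga nab nag nbg albe alga bega ntal ntbe ntga.
have [lb [lbL alb' belb]] := col_line cbe.
have tlb : t \notin lb by apply: contraNN ntbe => tlb; exact: line_R lbL tlb belb.
have [x xlb ctx] := gq_ex lbL tlb.
have xbe : x != be by apply: contraNneq ntbe => <-; exact: col_R.
have xa : x != a by apply: contraNneq nta => <-; exact: col_R.
have nbx : ~~ R b x.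
  apply/negP => bx; have blb := L1 lbL belb xlb (ns xbe) bbe bx.
  by move: cab; rewrite -R_col // (line_R lbL alb' blb).
have nalx : ~~ R al x.
  apply/negP => alx; have allb := L1 lbL alb' xlb (ns xa) (Rs aal) alx.
  by move: nab; rewrite -R_col // (line_R lbL allb belb).
have ngax : ~~ R ga x.
  apply/negP => gax; have galb := L1 lbL alb' xlb (ns xa) (Rs aga) gax.
  by move: nbg; rewrite -R_col // (line_R lbL belb galb).
have Y : forall de, b != de -> col b de -> ~~ R t de -> ~~ R de x ->
    exists m y, [/\ m \in L, b \in m, de \in m, y \in m & [/\ y != b, col t y & col x y]].
  move=> de bde cbde ntde ndex.
  have [m [mL bm dem]] := col_line cbde.
  have tm : t \notin m by apply: contraNN ntde => tm; exact: line_R mL tm dem.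
  have [y1 y1m cty1] := gq_ex mL tm.
  have y1de : y1 != de by apply: contraNneq ntde => <-; exact: col_R.
  have y1b : y1 != b by apply: contraNneq ntb => <-; exact: col_R.
  have xm : x \notin m by apply: contraNN nbx => xm; exact: line_R mL bm xm.
  have [y2 y2m cxy2] := gq_ex mL xm.
  have y2de : y2 != de by apply: contraNneq ndex => <-; rewrite R_sym; exact: col_R.
  have y2b : y2 != b by apply: contraNneq nbx => <-; rewrite R_sym; exact: col_R.
  have E := TPU mL bm dem y1m y2m bde y1b y1de y2b y2de; subst y2.
  by exists m, y1; split.
have [m1 [y1 [m1L bm1 alm1 y1m1 [y1b cty1 cxy1]]]] := Y al (ns alb) cbal ntal nalx.
have [m3 [y3 [m3L bm3 gam3 y3m3 [y3b cty3 cxy3]]]] := Y ga (ns gab) cbga ntga ngax.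
have [l' [l'L tl' xl']] := col_line ctx.
have tx : t != x := col_neq ctx.
have y1l' := L1 l'L tl' xl' tx (Rs (col_R cty1)) (Rs (col_R cxy1)).
have y3l' := L1 l'L tl' xl' tx (Rs (col_R cty3)) (Rs (col_R cxy3)).
have y13 : y1 != y3.
  apply/eqP => E; subst y3.
  have E := same_line m1L m3L y1m1 bm1 y3m3 bm3 y1b; subst m3.
  by move: nag; rewrite -R_col // (line_R m1L alm1 gam3).
have bl' := L1 l'L y1l' y3l' y13 (line_R m1L bm1 y1m1) (line_R m3L bm3 y3m3).
by move: nbx; rewrite (line_R l'L bl' xl').
Qed.

End GQ.

Section S.
Variables (P P' : finType) (L : {set {set P}}) (L' : {set {set P'}}).
Variables (f : P -> P') (g : P' -> P) (fK : cancel f g) (gK : cancel g f).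
Hypothesis GL' : GQ22 L'.
Hypothesis fiso : forall l, (l \in L) = (f @: l \in L').
Local Notation R' := (R L').
Local Notation col' := (collinear L').

Lemma finj : injective f. Proof. exact: can_inj fK. Qed.

Lemma T1 x y : collinear L x y = col' (f x) (f y).
Proof.
apply/idP/idP.
  case/andP => xy /exists_inP [l lL /andP [xl yl]].
  rewrite /collinear (inj_eq finj) xy; apply/exists_inP; exists (f @: l).
    by rewrite -fiso.
  by rewrite !imset_f.
case/andP => fxy /exists_inP [l' l'L /andP [xl yl]].
rewrite /collinear -(inj_eq finj) fxy /=; apply/exists_inP; exists (f @^-1: l').
  rewrite fiso; have -> : f @: (f @^-1: l') = l' => //.
  apply/setP => z'; apply/imsetP/idP => [[z zin ->]|zl]; first by rewrite inE in zin.
  by exists (g z'); rewrite ?inE gK.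
by rewrite !inE xl yl.
Qed.

Lemma T2 z i : (z \in perp L i) = (f z \in perp L' (f i)).
Proof. by rewrite !inE (inj_eq finj) T1. Qed.

Lemma T3 (A : {set P}) : perpset L' (f @: A) = f @: perpset L A.
Proof.
apply/setP => z'; rewrite -(gK z'); set z := g z'; rewrite mem_imset; last exact: finj.
apply/bigcapP/bigcapP.
  by move=> H i iA; rewrite T2; apply: H; exact: imset_f.
by move=> H i' /imsetP [i iA ->]; rewrite -T2; exact: H.
Qed.

Lemma CT (A : {set P}) : complete_triad L A = complete_triad L' (f @: A).
Proof.
rewrite /complete_triad /triad T3 !card_imset //; try exact: finj.
have -> : [forall x in A, forall y in A, ~~ collinear L x y] =
          [forall x in f @: A, forall y in f @: A, ~~ col' x y] => //.
apply/forall_inP/forall_inP => H x.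
  move=> /imsetP [x0 x0A ->]; apply/forall_inP => y /imsetP [y0 y0A ->].
  by rewrite -T1; exact: (forall_inP (H x0 x0A) y0 y0A).
move=> xA; apply/forall_inP => y yA; rewrite T1.
exact: (forall_inP (H _ (imset_f f xA)) _ (imset_f f yA)).
Qed.

Lemma calP_E s : (s \in calP L' f) = R' (f s.1) s.2.
Proof. by rewrite inE inperp. Qed.

Lemma perpset3 a b c z : (z \in perpset L' [set a; b; c]) = [&& R' a z, R' b z & R' c z].
Proof.
apply/bigcapP/and3P.
  by move=> H; rewrite -!inperp; split; apply: H; rewrite !inE eqxx ?orbT.
by case=> Ha Hb Hc i; rewrite inperp !inE => /orP [/orP [] |] /eqP ->.
Qed.

Lemma calL_inv X : X \in calL L L' f -> exists x y z u v w,
  [/\ X = [set (x,u); (y,v); (z,w)], [&& x != y, y != z & x != z],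
      [&& u != v, v != w & u != w], X \subset calP L' f &
      forall a b, a \in [set x; y; z] -> b \in [set u; v; w] -> R' (f a) b].
Proof.
rewrite inE => /existsP [x /existsP [y /existsP [z /existsP [u /existsP [v /existsP [w H]]]]]].
move: H => /andP [/eqP EX /andP [sub /andP [dist /andP [TL /andP [/eqP Ep ud]]]]].
exists x, y, z, u, v, w; split => // a b aT; rewrite -Ep => /bigcapP H.
by rewrite -inperp; apply: H; exact: imset_f.
Qed.

Lemma LL X s1 s2 : X \in calL L L' f -> s1 \in X -> s2 \in X ->
  [/\ R' (f s1.1) s2.2, s1.1 = s2.1 -> s1 = s2 & s1.2 = s2.2 -> s1 = s2].
Proof.
move=> /calL_inv [x [y [z [u [v [w [-> /and3P [xy yz xz] /and3P [uv vw uw] _ PS]]]]]]].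
have E : forall s, s \in [set (x,u); (y,v); (z,w)] ->
  [/\ s.1 \in [set x; y; z] & s.2 \in [set u; v; w]].
  by move=> s; rewrite !inE => /orP [/orP [] |] /eqP -> /=; rewrite !eqxx ?orbT.
move=> s1X s2X; split.
- by case: (E _ s1X) => h1 _; case: (E _ s2X) => _ h2; exact: PS.
- move: s1X s2X; rewrite !inE => /orP [/orP [] |] /eqP -> /orP [/orP [] |] /eqP -> //= /eqP;
  by rewrite ?(negbTE xy) ?(negbTE yz) ?(negbTE xz) ?(negbTE (ns xy)) ?(negbTE (ns yz)) ?(negbTE (ns xz)).
- move: s1X s2X; rewrite !inE => /orP [/orP [] |] /eqP -> /orP [/orP [] |] /eqP -> //= /eqP;
  by rewrite ?(negbTE uv) ?(negbTE vw) ?(negbTE uw) ?(negbTE (ns uv)) ?(negbTE (ns vw)) ?(negbTE (ns uw)).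
Qed.

Lemma cards3 (T : finType) (a b c : T) : a != b -> a != c -> b != c -> #|[set a; b; c]| = 3.
Proof. by move=> ab ac bc; rewrite -setUA cardsU1 cards2 !inE negb_or ab ac bc. Qed.

Lemma imset3 (x y z : P) : f @: [set x; y; z] = [set f x; f y; f z].
Proof. by rewrite !imsetU !imset_set1. Qed.

Lemma PL l : l \in L' -> perpset L' l = l.
Proof.
move=> lL; apply/setP => s; apply/bigcapP/idP.
  move=> H; have [p pl _] := line_third GL' s s lL.
  have [q ql /andP [qp _]] := line_third GL' p p lL.
  by apply: (L1 GL' lL pl ql (ns qp)); rewrite R_sym -inperp; apply: H.
by move=> sl i il; rewrite inperp; exact: line_R lL il sl.
Qed.

Lemma mkL x y z u v w : [&& x != y, y != z & x != z] -> [&& u != v, v != w & u != w] ->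
  ([set x; y; z] \in L) || complete_triad L [set x; y; z] ->
  perpset L' [set f x; f y; f z] = [set u; v; w] ->
  R' (f x) u -> R' (f y) v -> R' (f z) w -> [set (x,u); (y,v); (z,w)] \in calL L L' f.
Proof.
move=> d1 d2 TL Ep xu yv zw; rewrite inE; apply/existsP; exists x; apply/existsP; exists y.
apply/existsP; exists z; apply/existsP; exists u; apply/existsP; exists v; apply/existsP; exists w.
rewrite eqxx d1 d2 TL imset3 Ep eqxx /= andbT.
by apply/subsetP => s; rewrite calP_E !inE => /orP [/orP [] |] /eqP ->.
Qed.

Lemma ADJ1 (s1 s2 : P * P') : collinear (calL L L' f) s1 s2 ->
  [/\ s1.1 != s2.1, s1.2 != s2.2, R' (f s1.1) s2.2 & R' (f s2.1) s1.2] /\ (R' (f s1.1) s1.2 /\ R' (f s2.1) s2.2).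
Proof.
case/andP => ne /exists_inP [X XL /andP [s1X s2X]].
have [A1 B1 C1] := LL XL s1X s2X; have [A2 _ _] := LL XL s2X s1X.
have [A11 _ _] := LL XL s1X s1X; have [A22 _ _] := LL XL s2X s2X.
split; [split|] => //.
- by apply/eqP => E; move: ne; rewrite (B1 E) eqxx.
- by apply/eqP => E; move: ne; rewrite (C1 E) eqxx.
Qed.

Lemma ADJ2 x y u v : R' (f x) u -> R' (f y) v -> x != y -> u != v ->
  R' (f x) v -> R' (f y) u -> collinear (calL L L' f) (x,u) (y,v).
Proof.
move=> xu yv xy uv xv yu.
have fxy : f x != f y by rewrite (inj_eq finj).
rewrite /collinear; apply/andP; split; first by apply: contra xy => /eqP [-> _].
case: (boolP (col' (f x) (f y))) => cxy.
  have [l [lL xl yl]] := col_line cxy.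
  have ul := L1 GL' lL xl yl fxy (Rs xu) (Rs yu).
  have vl := L1 GL' lL xl yl fxy (Rs xv) (Rs yv).
  have [z' z'l /andP [zx zy]] := line_third GL' (f x) (f y) lL.
  have [w wl /andP [wu wv]] := line_third GL' u v lL.
  have yz : y != g z' by apply: contraNneq zy => ->; rewrite gK.
  have xz : x != g z' by apply: contraNneq zx => ->; rewrite gK.
  have El := line_eq3 GL' lL xl yl z'l fxy (ns zx) (ns zy).
  apply/exists_inP; exists [set (x,u); (y,v); (g z', w)]; last by rewrite !inE !eqxx ?orbT.
  apply: mkL => //.
  - by rewrite xy yz xz.
  - by rewrite uv (ns wu) (ns wv).
  - by rewrite fiso imset3 gK -El lL.
  - by rewrite gK -El PL // (line_eq3 GL' lL ul vl wl uv (ns wu) (ns wv)).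
  - by rewrite gK; exact: line_R lL z'l wl.
have [w [xw yw wu wv]] := TH GL' fxy cxy xu yu xv yv uv.
have ncuv := PN GL' fxy cxy xu yu xv yv uv.
have [z' [uz vz zx zy]] := TH GL' uv ncuv (Rs xu) (Rs xv) (Rs yu) (Rs yv) fxy.
have zw := RG GL' fxy cxy xu yu xv yv xw yw uv (ns wu) (ns wv) (Rs uz) (Rs vz) zx zy.
have yz : y != g z' by apply: contraNneq zy => ->; rewrite gK.
have xz : x != g z' by apply: contraNneq zx => ->; rewrite gK.
have PE : perpset L' [set f x; f y; z'] = [set u; v; w].
  apply/setP => s; rewrite perpset3; apply/idP/idP.
    move=> /and3P [xs ys _].
    by have := BD GL' fxy cxy xu yu xv yv xw yw uv (ns wu) (ns wv) xs ys; rewrite !inE orbA.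
  by rewrite !inE => /orP [/orP [] |] /eqP ->; rewrite ?xu ?yu ?xv ?yv ?xw ?yw ?(Rs uz) ?(Rs vz) ?zw.
have c2 := PN GL' uv ncuv (Rs xu) (Rs xv) uz vz (ns zx).
have c3 := PN GL' uv ncuv (Rs yu) (Rs yv) uz vz (ns zy).
apply/exists_inP; exists [set (x,u); (y,v); (g z', w)]; last by rewrite !inE !eqxx ?orbT.
apply: mkL => //.
- by rewrite xy yz xz.
- by rewrite uv (ns wu) (ns wv).
- apply/orP; right.
  rewrite CT imset3 gK /complete_triad /triad PE !cards3 ?(ns zx) ?(ns zy) ?(ns wu) ?(ns wv) //=.
  rewrite andbT; apply/forall_inP => a; rewrite !inE => /orP [/orP [] |] /eqP ->;
  apply/forall_inP => b; rewrite !inE => /orP [/orP [] |] /eqP ->;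
  by rewrite ?col_irr ?(negbTE cxy) ?(negbTE c2) ?(negbTE c3) ?(negbTE (ncs cxy)) ?(negbTE (ncs c2)) ?(negbTE (ncs c3)).
- by rewrite gK.
- by rewrite gK.
Qed.

Lemma D2 (th s p : P * P') : collinear (calL L L' f) th s -> collinear (calL L L' f) s p ->
  R' (f th.1) p.2 = R' (f p.1) th.2.
Proof.
case: th => t tau; case: s => y v; case: p => a al /=.
move=> /ADJ1 [[ty tv tv' yt] [tt yv]] /ADJ1 [[ya va ya' av] [_ aa]] /=.
rewrite /= in ty tv tv' yt tt yv ya va ya' av aa.
have fty : f t != f y by rewrite (inj_eq finj).
have fay : f a != f y by rewrite (inj_eq finj) eq_sym.
apply/idP/idP => H.
  exact: (K GL' fty va tv' H yv ya' av aa (Rs tt) (Rs yt)).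
exact: (K GL' fay (ns tv) av H yv yt tv' tt (Rs aa) (Rs ya')).
Qed.

Lemma mainS Ln (th p q r : P * P') :
    Ln \in calL L L' f -> th \in calP L' f ->
    p \in Ln -> q \in Ln -> r \in Ln -> p != q -> r != p -> r != q ->
    dist_eq (calL L L' f) th p 2 -> dist_eq (calL L L' f) th q 2 ->
    collinear (calL L L' f) th r.
Proof.
move=> HL Hth pL qL rL pq rp rq [W2p Np] [W2q Nq].
have np0 : th != p by apply/eqP => E; apply: (Np 0 isT).
have nq0 : th != q by apply/eqP => E; apply: (Nq 0 isT).
have np1 : ~~ collinear (calL L L' f) th p.
  by apply/negP => H; apply: (Np 1 isT); exists p.
have nq1 : ~~ collinear (calL L L' f) th q.
  by apply/negP => H; apply: (Nq 1 isT); exists q.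
have Ep : R' (f th.1) p.2 = R' (f p.1) th.2.
  by case: W2p => s [c1 [s' [c2 E]]]; subst s'; exact: D2 c1 c2.
have Eq : R' (f th.1) q.2 = R' (f q.1) th.2.
  by case: W2q => s [c1 [s' [c2 E]]]; subst s'; exact: D2 c1 c2.
have Hth' := Hth; rewrite calP_E in Hth'.
have Rfact : forall s1 s2, s1 \in Ln -> s2 \in Ln -> R' (f s1.1) s2.2.
  by move=> s1 s2 h1 h2; case: (LL HL h1 h2).
have N1 : forall s1 s2, s1 \in Ln -> s2 \in Ln -> s1 != s2 -> s1.1 != s2.1.
  by move=> s1 s2 h1 h2 ne; apply/eqP => E; case: (LL HL h1 h2) => _ B _; move: ne; rewrite (B E) eqxx.
have N2 : forall s1 s2, s1 \in Ln -> s2 \in Ln -> s1 != s2 -> s1.2 != s2.2.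
  by move=> s1 s2 h1 h2 ne; apply/eqP => E; case: (LL HL h1 h2) => _ _ B; move: ne; rewrite (B E) eqxx.
have ab := N1 _ _ pL qL pq; have ca := N1 _ _ rL pL rp; have cb := N1 _ _ rL qL rq.
have alb := N2 _ _ pL qL pq; have gal := N2 _ _ rL pL rp; have gbe := N2 _ _ rL qL rq.
have Raa := Rfact _ _ pL pL; have Rab := Rfact _ _ pL qL; have Rac := Rfact _ _ pL rL.
have Rba := Rfact _ _ qL pL; have Rbb := Rfact _ _ qL qL; have Rbc := Rfact _ _ qL rL.
have Rca := Rfact _ _ rL pL; have Rcb := Rfact _ _ rL qL; have Rcc := Rfact _ _ rL rL.
move: th p q r {pL qL rL pq rp rq W2p Np W2q Nq Rfact N1 N2 HL} Hth Hth' np0 nq0 np1 nq1 Ep Eq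
  ab ca cb alb gal gbe Raa Rab Rac Rba Rbb Rbc Rca Rcb Rcc.
move=> [t tau] [a al] [b be] [c ga] /= Hth Htt np0 nq0 np1 nq1 Ep Eq
  ab ca cb alb gal gbe Raa Rab Rac Rba Rbb Rbc Rca Rcb Rcc.
have fab : f a != f b by rewrite (inj_eq finj).
have fac : f a != f c by rewrite (inj_eq finj) eq_sym.
have fbc : f b != f c by rewrite (inj_eq finj) eq_sym.
have Hp2 : R' (f t) al -> R' (f a) tau -> (t = a) \/ (tau = al).
  move=> h1 h2; case: (t =P a) => [-> | /eqP ta]; first by left.
  case: (tau =P al) => [-> | /eqP tal]; first by right.
  by move: np1; rewrite ADJ2.
have Hq2 : R' (f t) be -> R' (f b) tau -> (t = b) \/ (tau = be).
  move=> h1 h2; case: (t =P b) => [-> | /eqP ta]; first by left.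
  case: (tau =P be) => [-> | /eqP tal]; first by right.
  by move: nq1; rewrite ADJ2.
have two3 : forall s, R' s al -> R' s be -> R' s ga.
  move=> s h1 h2; exact: (K GL' fab alb Raa Rab Rba Rbb h1 h2 (Rs Rac) (Rs Rbc)).
have two3' : forall s, R' (f a) s -> R' (f b) s -> R' (f c) s.
  move=> s h1 h2; apply: Rs.
  exact: (K GL' alb fab (Rs Raa) (Rs Rba) (Rs Rab) (Rs Rbb) (Rs h1) (Rs h2) Rca Rcb).
have Cv := Cover GL' (f t) fab alb (ns gal) (ns gbe) Raa Rab Rac Rba Rbb Rbc.
have Cv' := Cover GL' tau alb fab fac fbc (Rs Raa) (Rs Rba) (Rs Rca) (Rs Rab) (Rs Rbb) (Rs Rcb).
have Hc : R' (f c) ga := Rcc.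
suff [tc tg Rtg Rct] : [/\ t != c, tau != ga, R' (f t) ga & R' (f c) tau].
  by apply: ADJ2.
case Ha: (R' (f t) al); case Hb: (R' (f t) be).
- have h1 : R' (f a) tau by rewrite -Ep.
  have h2 : R' (f b) tau by rewrite -Eq.
  have G1 := two3 _ Ha Hb; have G2 := two3' _ h1 h2.
  case: (Hp2 Ha h1) => E1; case: (Hq2 Hb h2) => E2.
  + by move: ab; rewrite -E1 -E2 eqxx.
  + by split => //; rewrite ?E1 ?E2 eq_sym.
  + by split => //; rewrite ?E1 ?E2 eq_sym.
  + by move: alb; rewrite -E1 -E2 eqxx.
- have h1 : R' (f a) tau by rewrite -Ep.
  case: (Hp2 Ha h1) => E1.
    by move: Hb; rewrite E1 Rab.
  by move: Eq; rewrite Hb E1 Rba.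
- have h2 : R' (f b) tau by rewrite -Eq.
  case: (Hq2 Hb h2) => E2.
    by move: Ha; rewrite E2 Rba.
  by move: Ep; rewrite Ha E2 Rab.
- have Rtg : R' (f t) ga by move: Cv; rewrite Ha Hb.
  have Rct : R' (f c) tau by move: Cv'; rewrite R_sym -Ep Ha R_sym -Eq Hb /= R_sym.
  split => //.
    by apply/eqP => E; move: Ha; rewrite E Rca.
  by apply/eqP => E; move: Ep; rewrite Ha E Rac.
Qed.

End S.

Theorem proposition3p5 (P P' : finType) (L : {set {set P}}) (L' : {set {set P'}})
  (f : P -> P') :
  GQ22 L -> GQ22 L' -> is_iso L L' f ->
  forall (Ln : {set P * P'}) (theta p q r : P * P'),
    Ln \in calL L L' f -> theta \in calP L' f ->
    p \in Ln -> q \in Ln -> r \in Ln -> p != q -> r != p -> r != q ->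
    dist_eq (calL L L' f) theta p 2 -> dist_eq (calL L L' f) theta q 2 ->
    collinear (calL L L' f) theta r.
Proof.
move=> _ GL' [[g fK gK] fiso] Ln th p q r.
exact: (mainS fK gK GL' fiso).
Qed.
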